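(* Let $n\ge 1$, $K\ge 1$ be integers and $p_n\in[0,1]$. Let $(\mathcal{G}(n),\mathcal{A}(n))$ be the output of the Threshold exploration algorithm and let $(G(n,p_n),\mathcal{I}(n))$ be the graph and final active set of the Threshold model (both described in the context). Then the joint distribution of $(\mathcal{G}(n),\mathcal{A}(n))$ is identical to the joint distribution of $(G(n,p_n),\mathcal{I}(n))$.
   Context: $G(n,p_n)$ is the Erdős–Rényi random graph on vertex set $[n]=\{1,\dots,n\}$, each of the pairs $\{u,v\}$, $u\ne v$, being an edge independently with probability $p_n$. For a graph $G$ and vertex set $U$, $G_U$ is the induced subgraph and $d_{\max}$ the maximum degree. Threshold model: given a realization of $G(n,p_n)$, set $\mathcal{I}(0)=\varnothing$. At each step $t+1$ ($0\le t\le n-1$), a vertex $v$ is chosen uniformly at random among vertices not selected before (independently of the graph); if $d_{\max}(G_{\mathcal{I}(t)\cup\{v\}})<K$ set $\mathcal{I}(t+1)=\mathcal{I}(t)\cup\{v\}$, otherwise $\mathcal{I}(t+1)=\mathcal{I}(t)$. $\mathcal{I}(n)$ is the final (maximal greedy $K$-independent) set. Threshold exploration algorithm: maintain sets $\mathcal{A}_0(t),\dots,\mathcal{A}_{K-1}(t)$ (active vertices with exactly $k$ active neighbours), $\mathcal{B}(t)$ (frozen vertices) and $\mathcal{U}(t)$ (unexplored vertices), initially $\mathcal{A}_k(0)=\mathcal{B}(0)=\varnothing$, $\mathcal{U}(0)=[n]$; let $\mathcal{A}(t)=\bigcup_k\mathcal{A}_k(t)$. At step $t+1$, select $v\in\mathcal{U}(t)$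 uniformly at random, remove it from $\mathcal{U}$, and for each $u\in\mathcal{A}(t)\cup\mathcal{B}(t)$ independently add the edge $\{v,u\}$ with probability $p_n$. Let $v_1,\dots,v_r$ ($r\ge0$) be the vertices of $\mathcal{A}(t)$ joined to $v$, with $v_i\in\mathcal{A}_{k_i}(t)$. If $r<K$ and no $v_i$ lies in $\mathcal{A}_{K-1}(t)$, then $v$ is put into $\mathcal{A}_r$ and each $v_i$ is moved from $\mathcal{A}_{k_i}$ to $\mathcal{A}_{k_i+1}$; otherwise $v$ is put into $\mathcal{B}$ and the sets $\mathcal{A}_k$ are unchanged. After $n$ steps the algorithm outputs $\mathcal{A}(n)$ and the graph $\mathcal{G}(n)$ on $[n]$ formed by all edges added. *)

(* Defs.v *)
From HB Require Import structures.
From mathcomp Require Import all_boot all_order all_algebra.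
Set Implicit Arguments. Unset Strict Implicit. Unset Printing Implicit Defensive.
Import Order.TTheory GRing.Theory Num.Theory.
Local Open Scope ring_scope.

(* Vertices are 'I_n (representing [n]); a graph is a set of edges, each edge
   a 2-element subset of 'I_n. *)
Definition graph (n : nat) := {set {set 'I_n}}.

Definition pairs (n : nat) : {set {set 'I_n}} :=
  [set e : {set 'I_n} | #|e| == 2%N].

Definition ideg n (G : graph n) (U : {set 'I_n}) (x : 'I_n) : nat :=
  #|[set y in U | [set x; y] \in G]|.

(* maximum degree of the induced subgraph G_U (0 for the empty graph) *)
Definition dmax n (G : graph n) (U : {set 'I_n}) : nat :=
  (\max_(x in U) ideg G U x)%N.

Definition gnp_prob (R : realFieldType) n (p : R) (G : graph n) : R :=
  if G \subset pairs n
  then p ^+ #|G| * (1 - p) ^+ (#|pairs n| - #|G|)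
  else 0.

Definition outcome (n : nat) := (graph n * {set 'I_n})%type.

(* thr_prob m G I U o : probability that, starting with current active set I
   and set of not-yet-selected vertices U, after m further steps the pair
   (graph, final active set) equals o. *)
Fixpoint thr_prob (R : realFieldType) n (K : nat) (m : nat) (G : graph n)
    (I U : {set 'I_n}) (o : outcome n) : R :=
  match m with
  | 0%N => ((G, I) == o)%:R
  | m'.+1 =>
      \sum_(v in U) (#|U|%:R)^-1 *
        thr_prob R K m' G
          (if (dmax G (v |: I) < K)%N then v |: I else I) (U :\ v) o
  end.

Definition thr_dist (R : realFieldType) n (K : nat) (p : R) (o : outcome n) : R :=
  \sum_(G : graph n) gnp_prob p G * thr_prob R K n G set0 setT o.

(* State: active set A, level function lvl (u \in A_k iff u \in A and
   lvl u = k), frozen set B, unexplored set U, and the edges added so far. *)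
Record xstate (n : nat) := XState {
  xA : {set 'I_n};
  xlvl : {ffun 'I_n -> nat};
  xB : {set 'I_n};
  xU : {set 'I_n};
  xE : graph n }.

Definition xinit (n : nat) : xstate n :=
  XState set0 [ffun => 0%N] set0 setT set0.

(* One step, given the selected vertex v and the set S of vertices of
   A(t) \cup B(t) to which v gets joined. *)
Definition xstep n (K : nat) (s : xstate n) (v : 'I_n) (S : {set 'I_n}) :
    xstate n :=
  let Vs := S :&: xA s in
  let r := #|Vs| in
  let E' := xE s :|: [set [set v; u] | u in S] in
  let U' := xU s :\ v in
  if (r < K)%N && [forall u in Vs, xlvl s u != K.-1]
  then XState (v |: xA s)
              [ffun u => if u \in Vs then (xlvl s u).+1
                         else if u == v then r else xlvl s u]
              (xB s) U' E'
  else XState (xA s) (xlvl s) (v |: xB s) U' E'.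

(* xprob m s o : probability that after m further steps from state s,
   the output (G(t), A(t)) equals o.  v uniform in U(t); each u in
   A(t) \cup B(t) independently joined to v with probability p. *)
Fixpoint xprob (R : realFieldType) n (K : nat) (p : R) (m : nat)
    (s : xstate n) (o : outcome n) : R :=
  match m with
  | 0%N => ((xE s, xA s) == o)%:R
  | m'.+1 =>
      \sum_(v in xU s) (#|xU s|%:R)^-1 *
        \sum_(S in powerset (xA s :|: xB s))
          p ^+ #|S| * (1 - p) ^+ (#|xA s :|: xB s| - #|S|) *
          xprob K p m' (xstep K s v S) o
  end.

Definition expl_dist (R : realFieldType) n (K : nat) (p : R) (o : outcome n) : R :=
  xprob K p n (xinit n) o.

(* Main.v *)
Require Import Defs.
From HB Require Import structures.
From mathcomp Require Import all_boot all_order all_algebra.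
From mathcomp Require Import zify ring lra.
Set Implicit Arguments. Unset Strict Implicit. Unset Printing Implicit Defensive.
Import Order.TTheory GRing.Theory Num.Theory.
Local Open Scope ring_scope.

Definition Unrev n (U : {set 'I_n}) : {set {set 'I_n}} :=
  [set e in pairs n | [exists x in e, x \in U]].

Definition Gof n (E : graph n) v (S : {set 'I_n}) (H' : graph n) : graph n :=
  E :|: ([set [set v; u] | u in S] :|: H').

Lemma E1 n (E : graph n) (U S : {set 'I_n}) (H' : graph n) v w y :
 (forall e, e \in E -> forall x, x \in e -> x \notin U) -> v \in U ->
 S \subset ~: U -> H' \subset Unrev (U :\ v) -> w \notin U -> y \notin U ->
 ([set w; y] \in Gof E v S H') = ([set w; y] \in E).
Proof.
move=> hE vU sS sH wU yU; rewrite /Gof !inE.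
case: ([set w; y] \in E) => //=.
apply/negbTE; rewrite negb_or; apply/andP; split.
  apply/imsetP => [[u uS ewy]].
  have : v \in [set w; y] by rewrite ewy !inE eqxx.
  by case/set2P => e'; subst v; [rewrite vU in wU | rewrite vU in yU].
apply/negP => /(subsetP sH); rewrite inE => /andP [_ /existsP [x /andP [xe]]].
rewrite !inE => /andP [_ xU].
by case/set2P: xe => exe; subst x; [rewrite xU in wU | rewrite xU in yU].
Qed.

Lemma E2 n (E : graph n) (U S : {set 'I_n}) (H' : graph n) v y :
 (forall e, e \in E -> forall x, x \in e -> x \notin U) -> v \in U ->
 S \subset ~: U -> H' \subset Unrev (U :\ v) -> y \notin U ->
 ([set v; y] \in Gof E v S H') = (y \in S).
Proof.
move=> hE vU sS sH yU; rewrite /Gof !inE.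
have -> : ([set v; y] \in E) = false.
  by apply/negbTE/negP => /hE /(_ v); rewrite !inE eqxx vU => /(_ isT).
have -> : ([set v; y] \in H') = false.
  apply/negbTE/negP => /(subsetP sH); rewrite inE => /andP [_ /existsP [x /andP [xe]]].
  rewrite !inE => /andP [xv xU].
  by case/set2P: xe => exe; subst x; [rewrite eqxx in xv | rewrite xU in yU].
rewrite orbF /=; apply/imsetP/idP.
  case=> u uS e.
  have : y \in [set v; u] by rewrite -e !inE eqxx orbT.
  case/set2P => [yv | -> //]; by subst y; rewrite vU in yU.
by move=> yS; exists y.
Qed.

Lemma E3 n (E : graph n) (U S : {set 'I_n}) (H' : graph n) v :
 (forall e, e \in E -> forall x, x \in e -> x \notin U) -> v \in U ->
 S \subset ~: U -> H' \subset Unrev (U :\ v) ->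
 ([set v; v] \in Gof E v S H') = false.
Proof.
move=> hE vU sS sH; rewrite /Gof !inE.
apply/negbTE; rewrite !negb_or; apply/and3P; split.
- by apply/negP => /hE /(_ v); rewrite !inE eqxx vU => /(_ isT).
- apply/imsetP => [[u uS e]].
  have : u \in [set v; v] by rewrite e !inE eqxx orbT.
  rewrite !inE orbb => /eqP eu; subst u.
  by move: (subsetP sS v uS); rewrite inE vU.
- apply/negP => /(subsetP sH); rewrite inE => /andP [_ /existsP [x /andP [xe]]].
  rewrite !inE => /andP [xv _].
  by rewrite !inE orbb in xe; rewrite xe in xv.
Qed.
Definition inv n K (s : xstate n) : Prop :=
 [/\ xA s :|: xB s = ~: xU s,
     (forall e, e \in xE s -> forall x, x \in e -> x \notin xU s) &
     (forall u, u \in xA s -> xlvl s u = ideg (xE s) (xA s) u /\ (xlvl s u < K)%N)].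

Lemma A_notU n K (s : xstate n) x : inv K s -> x \in xA s -> x \notin xU s.
Proof. by case=> hAB _ _ xA; rewrite -in_setC -hAB inE xA. Qed.

Lemma ideg_v n K (s : xstate n) v (S : {set 'I_n}) (H' : graph n) :
  inv K s -> v \in xU s -> S \subset ~: xU s -> H' \subset Unrev (xU s :\ v) ->
  ideg (Gof (xE s) v S H') (v |: xA s) v = #|S :&: xA s|.
Proof.
move=> hs vU sS sH; have [_ hE _] := hs.
rewrite /ideg; apply: eq_card => y; rewrite in_set in_setU1 in_setI.
case: eqP => [-> | yv] /=.
  rewrite (E3 hE vU sS sH).
  case vA: (v \in xA s); last by rewrite andbF.
  by move: (A_notU hs vA); rewrite vU.
case yA: (y \in xA s) => /=; last by rewrite andbF.
by rewrite (E2 hE vU sS sH (A_notU hs yA)) andbT.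
Qed.

Lemma set2C (T : finType) (a b : T) : [set a; b] = [set b; a].
Proof. by apply/setP => x; rewrite !inE orbC. Qed.

Lemma ideg_w n K (s : xstate n) v (S : {set 'I_n}) (H' : graph n) w :
  inv K s -> v \in xU s -> S \subset ~: xU s -> H' \subset Unrev (xU s :\ v) ->
  w \in xA s ->
  ideg (Gof (xE s) v S H') (v |: xA s) w = (ideg (xE s) (xA s) w + (w \in S))%N.
Proof.
move=> hs vU sS sH wA; have [_ hE _] := hs.
have vnA : v \notin xA s by apply/negP => /(A_notU hs); rewrite vU.
have wnU := A_notU hs wA.
have key : forall y, y \in xA s ->
   ([set w; y] \in Gof (xE s) v S H') = ([set w; y] \in xE s).
  by move=> y yA; rewrite (E1 hE vU sS sH wnU (A_notU hs yA)).
have kv : ([set w; v] \in Gof (xE s) v S H') = (w \in S).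
  by rewrite set2C (E2 hE vU sS sH wnU).
rewrite /ideg; move: (Gof (xE s) v S H') kv key => G kv key.
case wS: (w \in S).
  have -> : [set y in v |: xA s | [set w; y] \in G] =
            v |: [set y in xA s | [set w; y] \in xE s].
    apply/setP => y; rewrite !(in_set, in_setU1).
    case: eqP => [-> | yv] /=; first by rewrite kv wS.
    by case yA: (y \in xA s) => //=; rewrite key.
  by rewrite cardsU1 in_set (negbTE vnA) /= addn1.
rewrite addn0; apply: eq_card => y; rewrite !(in_set, in_setU1) ?in_set1.
case: (y =P v) => [-> | yv] /=; first by rewrite kv wS (negbTE vnA).
by case yA: (y \in xA s) => //=; rewrite key.
Qed.

Lemma ideg_same n K (s : xstate n) v (S : {set 'I_n}) w :
  inv K s -> v \in xU s -> S \subset ~: xU s -> w \in xA s ->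
  ideg (xE s :|: [set [set v; u] | u in S]) (xA s) w = ideg (xE s) (xA s) w.
Proof.
move=> hs vU sS wA; have [_ hE _] := hs.
have -> : xE s :|: [set [set v; u] | u in S] = Gof (xE s) v S set0.
  by rewrite /Gof setU0.
have key : forall y, y \in xA s ->
   ([set w; y] \in Gof (xE s) v S set0) = ([set w; y] \in xE s).
  by move=> y yA; rewrite (E1 hE vU sS (sub0set _) (A_notU hs wA) (A_notU hs yA)).
move: (Gof (xE s) v S set0) key => G key.
rewrite /ideg; apply: eq_card => y; rewrite !in_set.
case yA: (y \in xA s) => //=.
by rewrite key.
Qed.

Lemma dmax_lt n (G : graph n) X K : (1 <= K)%N ->
  (dmax G X < K)%N = [forall x in X, ideg G X x < K]%N.
Proof.
case: K => // K _; rewrite /dmax ltnS.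
by apply/bigmax_leqP/forall_inP => h x /h.
Qed.

Lemma cond_eq n K (s : xstate n) v (S : {set 'I_n}) (H' : graph n) :
  (1 <= K)%N -> inv K s -> v \in xU s -> S \subset ~: xU s ->
  H' \subset Unrev (xU s :\ v) ->
  (dmax (Gof (xE s) v S H') (v |: xA s) < K)%N =
  (#|S :&: xA s| < K)%N && [forall u in S :&: xA s, xlvl s u != K.-1].
Proof.
move=> K1 hs vU sS sH; have [_ _ hL] := hs.
rewrite dmax_lt //; apply/forall_inP/andP.
  move=> h; split.
    by have := h v (setU11 _ _); rewrite (ideg_v hs vU sS sH).
  apply/forall_inP => u; rewrite in_setI => /andP [uS uA].
  have := h u (setU1r _ uA); rewrite (ideg_w hs vU sS sH uA) uS.
  have [-> _] := hL u uA; lia.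
case=> hr /forall_inP hf x /setU1P [-> | xA].
  by rewrite (ideg_v hs vU sS sH).
rewrite (ideg_w hs vU sS sH xA).
have [e1 e2] := hL x xA.
case xS: (x \in S); last by rewrite -e1 addn0.
have := hf x; rewrite in_setI xS xA => /(_ isT).
rewrite -e1; lia.
Qed.

Lemma ideg_le_dmax n (G : graph n) (X : {set 'I_n}) x : x \in X -> (ideg G X x <= dmax G X)%N.
Proof. by move=> xX; rewrite /dmax (bigD1 x) //= leq_maxl. Qed.

Lemma inv_step n K (s : xstate n) v (S : {set 'I_n}) :
  (1 <= K)%N -> inv K s -> v \in xU s -> S \subset xA s :|: xB s ->
  inv K (xstep K s v S).
Proof.
move=> K1 hs vU sS0; have [hAB hE hL] := hs.
have sS : S \subset ~: xU s by rewrite -hAB.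
have hE' : forall e, e \in xE s :|: [set [set v; u] | u in S] ->
    forall x, x \in e -> x \notin xU s :\ v.
  move=> e; rewrite inE => /orP [eE x xe | /imsetP [u uS ->] x].
    by rewrite inE negb_and (hE e eE x xe) orbT.
  case/set2P => ->; first by rewrite !inE eqxx.
  by move: (subsetP sS u uS); rewrite !inE => /negbTE ->; rewrite andbF.
have hAB' : forall x, (x \in xA s) || (x \in xB s) = (x \notin xU s).
  by move=> x; move/setP: hAB => /(_ x); rewrite !inE.
have eG : xE s :|: [set [set v; u] | u in S] = Gof (xE s) v S set0.
  by rewrite /Gof setU0.
have hc := cond_eq K1 hs vU sS (sub0set (Unrev (xU s :\ v))).
rewrite /xstep; case: ifP => hcond; split => /=.
- apply/setP => x; rewrite !inE -orbA hAB'.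
  by case: eqP => //=; rewrite negb_and.
- exact: hE'.
- move=> u uvA; rewrite ffunE eG.
  have hd : (dmax (Gof (xE s) v S set0) (v |: xA s) < K)%N by rewrite hc hcond.
  suff -> : (if u \in S :&: xA s then (xlvl s u).+1
        else if u == v then #|S :&: xA s| else xlvl s u) =
        ideg (Gof (xE s) v S set0) (v |: xA s) u.
    by split => //; apply: leq_ltn_trans hd; apply: ideg_le_dmax.
  case/setU1P: uvA => [-> | uA].
    have vnA : v \notin xA s by apply/negP => /(A_notU hs); rewrite vU.
    by rewrite in_setI (negbTE vnA) andbF eqxx (ideg_v hs vU sS (sub0set _)).
  rewrite (ideg_w hs vU sS (sub0set _) uA) in_setI uA andbT.
  have [e1 _] := hL u uA.
  have unv : (u == v) = false.
    by apply/negbTE/eqP => euv; move: (A_notU hs uA); rewrite euv vU.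
  by case: (u \in S); rewrite ?unv e1 ?addn1 ?addn0.
- apply/setP => x; rewrite !inE orbCA hAB'.
  by case: eqP => //=; rewrite negb_and.
- exact: hE'.
- move=> u uA; rewrite (ideg_same hs vU sS uA); exact: hL.
Qed.

Lemma Unrev_split n (U : {set 'I_n}) v : v \in U ->
  Unrev U = Unrev (U :\ v) :|: [set [set v; u] | u in ~: U].
Proof.
move=> vU; apply/setP => e; rewrite inE !in_set; apply/idP/idP.
- case/andP => ep /existsP [x /andP [xe xU]].
  case: (boolP [exists y in e, y \in U :\ v]) => [hyes | hno].
    by rewrite ep.
  apply/orP; right.
  have xv : x = v.
    apply/eqP; apply: contraNT hno => xnv; apply/existsP; exists x.
    by rewrite xe !inE xnv xU.
  subst x.
  move: ep => /cards2P [a [b [anb eab]]].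
  have other : exists u, e = [set v; u] /\ u != v.
    move: xe; rewrite eab => /set2P [va | vb].
      by exists b; rewrite -va; split => //; rewrite -va in anb; rewrite eq_sym.
    by exists a; rewrite -vb set2C; split => //; rewrite -vb in anb.
  case: other => u [eu unv].
  apply/imsetP; exists u => //.
  rewrite inE; apply: contraNN hno => uU; apply/existsP; exists u.
  by rewrite eu !inE eqxx orbT unv uU.
- case/orP => [/andP [ep /existsP [x /andP [xe]]] | /imsetP [u uU ->]].
    by rewrite inE => /andP [_ xU]; rewrite ep; apply/existsP; exists x; rewrite xe.
  have unv : u != v by apply/eqP => euv; subst u; rewrite inE vU in uU.
  rewrite cards2 (eq_sym v u) unv /=.
  by apply/existsP; exists v; rewrite !inE eqxx.
Qed.

Lemma Unrev_disj n (U : {set 'I_n}) v :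
  [disjoint Unrev (U :\ v) & [set [set v; u] | u in ~: U]].
Proof.
rewrite -setI_eq0; apply/eqP/setP => e; rewrite !inE.
apply/negbTE; apply/negP => /andP [/andP [_ /existsP [x /andP [xe xUv]]] /imsetP [u uU eu]].
move: xUv; rewrite !inE => /andP [xv xU]; subst e.
move: xe => /set2P [xv' | xu]; first by rewrite xv' eqxx in xv.
by subst x; rewrite inE xU in uU.
Qed.

Lemma f_inj n (U : {set 'I_n}) v : v \in U ->
  {in ~: U &, injective (fun u => [set v; u])}.
Proof.
move=> vU a b aU bU /= eab.
have : a \in [set v; b] by rewrite -eab !inE eqxx orbT.
case/set2P => // av; subst a; by rewrite inE vU in aU.
Qed.

Lemma xstep_E n K (s : xstate n) v S :
  xE (xstep K s v S) = xE s :|: [set [set v; u] | u in S].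
Proof. by rewrite /xstep; case: ifP. Qed.
Lemma xstep_U n K (s : xstate n) v S : xU (xstep K s v S) = xU s :\ v.
Proof. by rewrite /xstep; case: ifP. Qed.
Lemma xstep_A n K (s : xstate n) v S :
  xA (xstep K s v S) = if (#|S :&: xA s| < K)%N && [forall u in S :&: xA s, xlvl s u != K.-1]
                       then v |: xA s else xA s.
Proof. by rewrite /xstep; case: ifP. Qed.

Definition wt (R : realFieldType) (p : R) (P : finType) (X H : {set P}) : R :=
  p ^+ #|H| * (1 - p) ^+ (#|X| - #|H|).
Lemma bij_sum (R : realFieldType) (p : R) (T P : finType) (C : {set T}) (Y Z : {set P})
  (f : T -> P) (G : {set P} -> R) :
  {in C &, injective f} -> f @: C = Z -> [disjoint Y & Z] ->
  \sum_(H in powerset (Y :|: Z)) wt p (Y :|: Z) H * G H =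
  \sum_(S in powerset C) wt p C S *
     \sum_(H' in powerset Y) wt p Y H' * G (f @: S :|: H').
Proof.
move=> finj fC dYZ.
under [RHS]eq_bigr => S _ do rewrite big_distrr /=.
rewrite pair_big /=.
rewrite (reindex_onto (fun q : {set T} * {set P} => f @: q.1 :|: q.2)
   (fun H => (C :&: f @^-1: H, H :&: Y))) /=; last first.
  move=> H; rewrite powersetE => sH.
  apply/setP => x; rewrite !inE; apply/idP/idP.
  - case/orP=> [/imsetP [y] | /andP [] //].
    by rewrite !inE => /andP [_ yH] ->.
  - move=> xH; move: (subsetP sH x xH); rewrite inE => /orP [xY | xZ].
      by rewrite xH xY orbT.
    move: xZ; rewrite -fC => /imsetP [y yC xe]; rewrite xe in xH *.
    by apply/orP; left; apply: imset_f; rewrite !inE yC.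
apply: eq_big.
  case=> S H' /=; rewrite !powersetE.
  have dis : forall S0 : {set T}, S0 \subset C -> [disjoint f @: S0 & Y].
    move=> S0 sS0; rewrite disjoint_sym; have hh : f @: S0 \subset Z by rewrite -fC imsetS.
    exact: (disjointWr hh dYZ).
  apply/idP/idP.
  - case/andP=> _ /eqP [<- <-]; by rewrite subsetIl subsetIr.
  - case/andP=> sS sH'.
    apply/andP; split.
      rewrite subUset; apply/andP; split; last by apply: subsetU; rewrite sH'.
      by apply: subsetU; apply/orP; right; rewrite -fC imsetS.
    apply/eqP; congr pair.
      apply/setP => x; rewrite !inE; apply/idP/idP.
      - case/andP => xC /orP [/imsetP [y yS fxy] | fH] .
          by rewrite (finj _ _ xC (subsetP sS y yS) fxy).
        have : f x \in f @: C by apply: imset_f.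
        rewrite fC => fZ.
        by move: (disjointFr dYZ (subsetP sH' _ fH)); rewrite fZ.
      - move=> xS; rewrite (subsetP sS x xS) /=.
        by rewrite imset_f.
    apply/setP => x; rewrite !inE; apply/idP/idP.
    - case/andP=> /orP [fx | //] xY.
      by move: (disjointFr (dis S sS) fx); rewrite xY.
    - by move=> xH; rewrite xH orbT (subsetP sH' x xH).
case=> S H' /= /andP [_ /eqP [eS eH]].
have sS : S \subset C by rewrite -eS subsetIl.
have sH' : H' \subset Y by rewrite -eH subsetIr.
rewrite mulrA; congr (_ * _).
have dis : [disjoint f @: S & H'].
  have hh : f @: S \subset Z by rewrite -fC; apply: imsetS.
  have dZY : [disjoint Z & Y] by rewrite disjoint_sym.
  exact: (disjointW hh sH' dZY).
have cU : forall (A B : {set P}), [disjoint A & B] -> #|A :|: B| = (#|A| + #|B|)%N.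
  by move=> A B dAB; rewrite cardsU (disjoint_setI0 dAB) cards0 subn0.
rewrite /wt (cU _ _ dis) (cU _ _ dYZ) card_in_imset; last first.
  by apply: sub_in2 finj => x; apply: (subsetP sS).
rewrite -fC card_in_imset //.
have l1 := subset_leq_card sS.
have l2 := subset_leq_card sH'.
have -> : ((#|Y| + #|C|) - (#|S| + #|H'|) = (#|C| - #|S|) + (#|Y| - #|H'|))%N by lia.
rewrite !exprD; ring.
Qed.

Lemma main (R : realFieldType) n K (p : R) (o : outcome n) m : (1 <= K)%N ->
  forall s : xstate n, inv K s -> #|xU s| = m ->
  xprob K p m s o = \sum_(H in powerset (Unrev (xU s)))
     wt p (Unrev (xU s)) H * thr_prob R K m (xE s :|: H) (xA s) (xU s) o.
Proof.
move=> K1; elim: m => [|m IH] s hs cU.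
  have U0 := cards0_eq cU.
  have -> : Unrev (xU s) = set0.
    apply/setP => e; rewrite !inE U0; apply/negbTE; rewrite negb_and; apply/orP; right.
    by apply/existsP => [[x /andP [_]]]; rewrite inE.
  by rewrite powerset0 big_set1 /wt cards0 expr0 mul1r subnn expr0 mul1r setU0.
have [hAB hE hL] := hs.
rewrite /=.
under [RHS]eq_bigr => H _ do rewrite big_distrr /=.
rewrite exchange_big /=.
apply: eq_bigr => v vU.
rewrite [RHS](eq_bigr (fun H => (#|xU s|%:R)^-1 *
   (wt p (Unrev (xU s)) H * thr_prob R K m (xE s :|: H)
      (if (dmax (xE s :|: H) (v |: xA s) < K)%N then v |: xA s else xA s)
      (xU s :\ v) o))); last by move=> H _; rewrite mulrCA.
rewrite -big_distrr /=; congr (_ * _).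
rewrite (Unrev_split vU).
rewrite (bij_sum p (fun H => thr_prob R K m (xE s :|: H)
      (if (dmax (xE s :|: H) (v |: xA s) < K)%N then v |: xA s else xA s)
      (xU s :\ v) o) (f_inj vU) erefl (Unrev_disj (xU s) v)).
rewrite hAB; apply: eq_bigr => S; rewrite powersetE => sS.
congr (_ * _).
have sS' : S \subset xA s :|: xB s by rewrite hAB.
have hs' := inv_step K1 hs vU sS'.
have cU' : #|xU (xstep K s v S)| = m.
  by rewrite xstep_U; move: cU; rewrite (cardsD1 v) vU add1n => -[].
rewrite (IH _ hs' cU') xstep_U.
apply: eq_bigr => H'; rewrite powersetE => sH'.
congr (_ * _).
rewrite xstep_E xstep_A -setUA.
have -> : xE s :|: ([set [set v; u] | u in S] :|: H') = Gof (xE s) v S H' by [].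
by rewrite (cond_eq K1 hs vU sS sH').
Qed.

Theorem proposition1 (R : realFieldType) (n K : nat) (p : R) :
  (1 <= n)%N -> (1 <= K)%N -> 0 <= p -> p <= 1 ->
  forall o : outcome n, expl_dist K p o = thr_dist K p o.
Proof.
move=> _ K1 _ _ o.
have hi : inv K (xinit n).
  split => //=.
  - by rewrite setU0 setCT.
  - by move=> e; rewrite inE.
  - by move=> u; rewrite inE.
rewrite /expl_dist (main p o K1 hi); last by rewrite /= cardsT card_ord.
have -> : Unrev (xU (xinit n)) = pairs n.
  apply/setP => e; rewrite !inE /=; case e2: (#|e| == 2%N) => //=.
  case/cards2P: e2 => a [b [_ ->]].
  by apply/existsP; exists a; rewrite !inE eqxx.
rewrite /thr_dist [RHS](bigID (fun G => G \in powerset (pairs n))) /=.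
rewrite [X in _ = _ + X]big1 ?addr0; last first.
  by move=> G; rewrite powersetE /gnp_prob => /negbTE ->; rewrite mul0r.
apply: eq_bigr => G; rewrite powersetE => sG.
by rewrite /gnp_prob sG /= set0U.
Qed.
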